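(* Let $R$ be a left PBW ring with respect to $\preceq$, and let $G=\{\mathbf g_1,\dots,\mathbf g_t\}\subseteq R^m$ be a Gröbner basis of $R\mathbf g_1+\dots+R\mathbf g_t$ consisting of elements with leading coefficient $1$. Let $I=\{(i,j):1\le i<j\le t,\ \operatorname{level}(\mathbf g_i)=\operatorname{level}(\mathbf g_j)\}$ and, for each $(i,j)\in I$, choose $h_{ijk}\in R$ with $SP(\mathbf g_i,\mathbf g_j)=\sum_{k=1}^t h_{ijk}\mathbf g_k$ and $\max_\preceq\{\exp(h_{ijk})+\exp(\mathbf g_k)\}=\exp(SP(\mathbf g_i,\mathbf g_j))$. Put $\mathbf s_{ij}=r_{ij}\mathbf e'_i-r_{ji}\mathbf e'_j-\sum_k h_{ijk}\mathbf e'_k\in R^t$, where $\mathbf e'_1,\dots,\mathbf e'_t$ is the canonical basis of $R^t$. Then $\{\mathbf s_{ij}:(i,j)\in I\}$ is a Gröbner basis of $\operatorname{Syz}(G)=\{(a_1,\dots,a_t)\in R^t:\sum a_i\mathbf g_i=0\}$ with respect to the ordering $\preceq_G$ on $\mathbb N^n\times\{1,\dots,t\}$; in particular it generates $\operatorname{Syz}(G)$.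
   Context: $R$ contains a skew field $\mathbb D$ and $x_1,\dots,x_n$ with monomials $\mathbf x^\alpha$ a left $\mathbb D$-basis; $\preceq$ admissible on $\mathbb N^n$; left PBW: $\exp(fg)=\exp f+\exp g$. $q_{\alpha,\beta}\ne0$ is the coefficient of $\mathbf x^{\alpha+\beta}$ in $\mathbf x^\alpha\mathbf x^\beta$. In a free module $R^m$ with basis $\mathbf e_i$, $\mathbf f=\sum c_{(\alpha,i)}\mathbf x^\alpha\mathbf e_i$, $\mathcal N(\mathbf f)$ its support, exponents ordered by TOP ($(\alpha,i)\preceq(\beta,j)$ iff $\alpha\prec\beta$ or ($\alpha=\beta$, $i\le j$)), $\exp(\mathbf f)=\max\mathcal N(\mathbf f)=(\operatorname{sexp}\mathbf f,\operatorname{level}\mathbf f)$, leading coefficient $c_{\exp\mathbf f}$; $\mathbb N^n$ acts by $(\alpha,i)+\beta=(\alpha+\beta,i)$. A Gröbner basis of a submodule $L$ (w.r.t. a given admissible order on exponents) is a finite $G\subseteq L$ with $\{\exp\mathbf f:0\ne\mathbf f\in L\}=\bigcup(\exp\mathbf g_i+\mathbb N^n)$. With $\alpha_i=\operatorname{sexp}\mathbf g_i$ and $\vee$ componentwise max: $r_{ij}=q^{-1}_{\alpha_i\vee\alpha_j-\alpha_i,\alpha_i}\mathbf x^{\alpha_i\vee\alpha_j-\alpha_i}$, $SP(\mathbf g_i,\mathbf g_j)=r_{ij}\mathbf g_i-r_{ji}\mathbf g_j$. The order $\preceq_G$ on $\mathbb N^n\times\{1,\dots,t\}$: $(\alpha,i)\preceq_G(\beta,j)$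 iff $\alpha+\exp\mathbf g_i\prec\beta+\exp\mathbf g_j$ (in TOP), or $\alpha+\exp\mathbf g_i=\beta+\exp\mathbf g_j$ and $j\le i$; exponents of elements of $R^t$ are computed with $\preceq_G$ for this statement. *)

(* Defs.v *)
From HB Require Import structures.
From mathcomp Require Import all_boot all_order all_algebra.
Set Implicit Arguments. Unset Strict Implicit. Unset Printing Implicit Defensive.
Import GRing.Theory.
Local Open Scope ring_scope.

(* Exponents: N^n represented as n-tuples of naturals. *)
Definition mon (n : nat) := (n.-tuple nat)%type.
Definition mon0 (n : nat) : mon n := [tuple 0%N | i < n].
Definition madd n (a b : mon n) : mon n := [tuple (tnth a i + tnth b i)%N | i < n].
Definition msub n (a b : mon n) : mon n := [tuple (tnth a i - tnth b i)%N | i < n].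
Definition mjoin n (a b : mon n) : mon n := [tuple maxn (tnth a i) (tnth b i) | i < n].

(* maximum of a finite list w.r.t. a (total) order; None = -infinity for the empty list *)
Definition omax (T : Type) (le : rel T) (s : seq T) : option T :=
  foldr (fun p o => if o is Some q then (if le q p then Some p else Some q) else Some p)
        None s.

Definition admissible n (le : rel (mon n)) : Prop :=
  [/\ reflexive le, transitive le, antisymmetric le & total le] /\
  (forall a b c, le a b -> le (madd a c) (madd b c)) /\
  (forall a, le (mon0 n) a).

Definition topLe n m (le : rel (mon n)) : rel (mon n * 'I_m) :=
  fun p q => (le p.1 q.1 && (p.1 != q.1)) || ((p.1 == q.1) && (p.2 <= q.2)%N).
Definition topLt n m (le : rel (mon n)) : rel (mon n * 'I_m) :=
  fun p q => topLe le p q && (p != q).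

Section PBW.
Variables (R : unitRingType) (n : nat).
Variables (D : pred R) (x : 'I_n -> R) (le : rel (mon n)).
(* coef f a = coefficient of x^a in f ; supp f = the (finite) support N(f) *)
Variables (coef : R -> mon n -> R) (supp : R -> seq (mon n)).

Definition xm (a : mon n) : R := \prod_(i < n) x i ^+ tnth a i.

Definition sexpr (f : R) : option (mon n) := omax le (supp f).

Definition leftPBW : Prop :=
  [/\
      [/\ 0 \in D, 1 \in D, (forall a b, a \in D -> b \in D -> a - b \in D),
          (forall a b, a \in D -> b \in D -> a * b \in D) &
          (forall d, d \in D -> d != 0 -> d \is a GRing.unit /\ d^-1 \in D)],
      admissible le,
      [/\ (forall f, uniq (supp f)),
          (forall f a, (a \in supp f) = (coef f a != 0)),
          (forall f a, coef f a \in D) &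
          (forall f, f = \sum_(a <- supp f) coef f a * xm a)],
      (forall (s : seq (mon n)) (c : mon n -> R), uniq s -> (forall a, c a \in D) ->
         \sum_(a <- s) c a * xm a = 0 -> forall a, a \in s -> c a = 0) &
      (forall f g a b, sexpr f = Some a -> sexpr g = Some b ->
         sexpr (f * g) = Some (madd a b))].

Definition qc (a b : mon n) : R := coef (xm a * xm b) (madd a b).

(* Free modules R^m as row vectors; left scalar multiplication is *: *)
Definition vsupp m (f : 'rV[R]_m) : seq (mon n * 'I_m) :=
  flatten [seq [seq (a, i) | a <- supp (f 0 i)] | i <- enum 'I_m].

Definition vexp m (ordv : rel (mon n * 'I_m)) (f : 'rV[R]_m) : option (mon n * 'I_m) :=
  omax ordv (vsupp f).

Definition lcoef m (f : 'rV[R]_m) : option R :=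
  omap (fun e => coef (f 0 e.2) e.1) (vexp (topLe le) f).

Definition isGB m (J : finType) (ordv : rel (mon n * 'I_m)) (L : 'rV[R]_m -> Prop)
    (P : pred J) (F : J -> 'rV[R]_m) : Prop :=
  (forall j, P j -> L (F j)) /\
  forall e : mon n * 'I_m,
    (exists f, [/\ L f, f != 0 & vexp ordv f = Some e]) <->
    (exists j (c : mon n) (e' : mon n * 'I_m),
        [/\ P j, vexp ordv (F j) = Some e' & e = (madd c e'.1, e'.2)]).

Variables (m t : nat) (g : 'I_t -> 'rV[R]_m).

Definition submod (f : 'rV[R]_m) : Prop :=
  exists a : 'I_t -> R, f = \sum_k a k *: g k.

Definition Syz (a : 'rV[R]_t) : Prop := \sum_k a 0 k *: g k = 0.

Definition gexp k := vexp (topLe le) (g k).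
Definition sexpg k : mon n := odflt (mon0 n) (omap fst (gexp k)).
Definition levelg k : option 'I_m := omap snd (gexp k).

Definition pairI (i j : 'I_t) : bool := (i < j)%N && (levelg i == levelg j).

Definition rc (i j : 'I_t) : R :=
  let c := msub (mjoin (sexpg i) (sexpg j)) (sexpg i) in (qc c (sexpg i))^-1 * xm c.

Definition SP (i j : 'I_t) : 'rV[R]_m := rc i j *: g i - rc j i *: g j.

Definition ordG : rel (mon n * 'I_t) := fun p q =>
  match gexp p.2, gexp q.2 with
  | Some e1, Some e2 =>
      let u := (madd p.1 e1.1, e1.2) in let v := (madd q.1 e2.1, e2.2) in
      topLt le u v || ((u == v) && (q.2 <= p.2)%N)
  | _, _ => true
  end.

(* h is a standard representation of SP(g_i,g_j):
   max_k {exp h_k + exp g_k} = exp SP (max over k with h_k <> 0, and exp 0 = -infinity) *)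
Definition stdrep (i j : 'I_t) (h : 'I_t -> R) : Prop :=
  [/\ SP i j = \sum_k h k *: g k,
      (SP i j = 0 -> forall k, h k = 0) &
      (forall e, vexp (topLe le) (SP i j) = Some e ->
         (forall k a b, sexpr (h k) = Some a -> gexp k = Some b ->
             topLe le (madd a b.1, b.2) e) /\
         (exists k a b, [/\ sexpr (h k) = Some a, gexp k = Some b &
             (madd a b.1, b.2) = e]))].

Definition ebas (k : 'I_t) : 'rV[R]_t := delta_mx 0 k.

Definition syzvec (h : 'I_t -> 'I_t -> 'I_t -> R) (i j : 'I_t) : 'rV[R]_t :=
  rc i j *: ebas i - rc j i *: ebas j - \sum_k h i j k *: ebas k.
End PBW.

(* Main.v *)
Require Import Defs.
From mathcomp Require Import all_boot all_order all_algebra zify.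
From Stdlib Require Import Classical ClassicalEpsilon Wf_nat.
Set Implicit Arguments. Unset Strict Implicit. Unset Printing Implicit Defensive.


Section Mon.
Variable n : nat.
Implicit Types a b c : mon n.

Lemma maddC a b : madd a b = madd b a.
Proof. apply: eq_from_tnth => i; rewrite !tnth_mktuple; exact: addnC. Qed.
Lemma maddA a b c : madd a (madd b c) = madd (madd a b) c.
Proof. apply: eq_from_tnth => i; rewrite !tnth_mktuple; exact: addnA. Qed.
Lemma madd0 a : madd (mon0 n) a = a.
Proof. apply: eq_from_tnth => i; rewrite !tnth_mktuple; exact: add0n. Qed.
Lemma maddI a b c : madd a c = madd b c -> a = b.
Proof.
move=> E; apply: eq_from_tnth => i.
have := congr1 (fun u => tnth u i) E; rewrite !tnth_mktuple => /eqP.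
by rewrite eqn_add2r => /eqP.
Qed.
Lemma msubK a b : (forall i, tnth a i <= tnth b i)%N -> madd a (msub b a) = b.
Proof.
move=> H; apply: eq_from_tnth => i; rewrite !tnth_mktuple; exact: subnKC.
Qed.
Lemma maddsub a c : msub (madd a c) c = a.
Proof. apply: eq_from_tnth => i; rewrite !tnth_mktuple; exact: addnK. Qed.

Lemma min_after (u : nat -> nat) p :
  exists i, (p < i)%N /\ forall j, (p < j)%N -> (u i <= u j)%N.
Proof.
suff H : forall v, (exists j, (p < j)%N /\ (u j <= v)%N) ->
  exists i, (p < i)%N /\ forall j, (p < j)%N -> (u i <= u j)%N.
  by apply: (H (u p.+1)); exists p.+1.
elim=> [|v IH] [j [pj uj]].
  by exists j; split=> // k _; move: uj; rewrite leqn0 => /eqP ->.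
case: (classic (exists j, (p < j)%N /\ (u j <= v)%N)) => [|N]; first exact: IH.
exists j; split=> // k pk; have : ~ (u k <= v)%N by move=> h; apply: N; exists k.
move/negP; rewrite -ltnNge => h; exact: leq_trans uj h.
Qed.

Lemma subseq_mono (u : nat -> nat) : exists phi : nat -> nat,
  (forall k, phi k < phi k.+1)%N /\ (forall k, u (phi k) <= u (phi k.+1))%N.
Proof.
have [sel Hsel] : {sel : nat -> nat | forall p, (p < sel p)%N /\
    forall j, (p < j)%N -> (u (sel p) <= u j)%N}.
  apply: constructive_indefinite_description.
  exists (fun p => proj1_sig (constructive_indefinite_description _ (min_after u p))).
  by move=> p; case: constructive_indefinite_description.
pose phi := fix phi k := if k is k'.+1 then sel (phi k') else sel 0.
exists phi; split=> k; first by case: (Hsel (phi k)).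
case: k => [|k] /=.
  case: (Hsel 0) => a0 b0; apply: b0; case: (Hsel (sel 0)) => h _.
  exact: ltn_trans a0 h.
case: (Hsel (phi k)) => a0 b0; apply: b0; case: (Hsel (sel (phi k))) => h _.
exact: ltn_trans a0 h.
Qed.

Lemma dickson (f : nat -> mon n) : exists i j, (i < j)%N /\ forall k, (tnth (f i) k <= tnth (f j) k)%N.
Proof.
suff H : forall r, (r <= n)%N -> exists phi : nat -> nat, (forall k, phi k < phi k.+1)%N /\
   forall k (c : 'I_n), (c < r)%N -> (tnth (f (phi k)) c <= tnth (f (phi k.+1)) c)%N.
  have [phi [H1 H2]] := H n (leqnn n); exists (phi 0), (phi 1); split=> // c.
  exact: H2.
elim=> [_|r IH rn].
  by exists id; split=> // k c.
have [phi [H1 H2]] := IH (ltnW rn).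
have [psi [P1 P2]] := subseq_mono (fun k => tnth (f (phi k)) (Ordinal rn)).
have mono : forall a b : nat, (a < b)%N -> (phi a < phi b)%N.
  move=> a b ab; elim: b ab => // b IHb; rewrite ltnS leq_eqVlt => /orP [/eqP ->|] //.
  by move=> /IHb h; exact: ltn_trans h (H1 b).
have monop : forall (c : 'I_n) (a b : nat), (c < r)%N -> (a <= b)%N -> (tnth (f (phi a)) c <= tnth (f (phi b)) c)%N.
  move=> c a b cr; elim: b => [|b IHb]; first by rewrite leqn0 => /eqP ->.
  rewrite leq_eqVlt => /orP [/eqP ->|] //; rewrite ltnS => /IHb h.
  exact: leq_trans h (H2 _ _ cr).
have psimono : forall a b : nat, (a <= b)%N -> (psi a <= psi b)%N.
  move=> a b; elim: b => [|b IHb]; first by rewrite leqn0 => /eqP ->.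
  rewrite leq_eqVlt => /orP [/eqP ->|] //; rewrite ltnS => /IHb h.
  exact: leq_trans h (ltnW (P1 b)).
exists (fun k => phi (psi k)); split; first by move=> k; apply: mono.
move=> k c; rewrite ltnS leq_eqVlt => /orP [/eqP E|cr].
  have -> : c = Ordinal rn by apply: val_inj.
  exact: P2.
by apply: monop => //; exact: ltnW.
Qed.

Variable le : rel (mon n).
Hypothesis Hle : admissible le.

Lemma le_refl a : le a a. Proof. by case: Hle => [[]]. Qed.
Lemma le_trans a b c : le a b -> le b c -> le a c.
Proof. by case: Hle => [[_ T _ _] _] h1 h2; exact: T h1 h2. Qed.
Lemma le_anti a b : le a b -> le b a -> a = b.
Proof. by case: Hle => [[_ _ A _] _] h1 h2; apply: A; rewrite h1 h2. Qed.
Lemma le_total a b : le a b || le b a.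
Proof. by case: Hle => [[_ _ _ T] _]; exact: T. Qed.
Lemma le_add a b c : le a b -> le (madd a c) (madd b c).
Proof. by case: Hle => [_ [H _]]; exact: H. Qed.
Lemma le_addl a b c : le a b -> le (madd c a) (madd c b).
Proof. by rewrite ![madd c _]maddC; exact: le_add. Qed.
Lemma le_0 a : le (mon0 n) a. Proof. by case: Hle => [_ [_ H]]. Qed.
Lemma le_addr a c : le a (madd a c).
Proof. by have := le_add a (le_0 c); rewrite madd0 maddC. Qed.
Lemma le_pw a b : (forall i, tnth a i <= tnth b i)%N -> le a b.
Proof. by move=> H; rewrite -(msubK H); exact: le_addr. Qed.
Lemma le_addI a b c : le (madd a c) (madd b c) -> le a b.
Proof.
move=> h; case/orP: (le_total a b) => // h2.
by have := le_anti h (le_add c h2) => /maddI ->; exact: le_refl.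
Qed.

Definition ltm a b := le a b && (a != b).

Lemma wf_ltm : well_founded (fun a b => ltm a b).
Proof.
move=> a0; apply: NNPP => N0.
have step : forall a, exists b, ~ Acc (fun a b => ltm a b) a -> ltm b a /\ ~ Acc (fun a b => ltm a b) b.
  move=> a; case: (classic (Acc (fun a b => ltm a b) a)) => [A|NA].
    by exists a.
  apply: NNPP => H; apply: NA; constructor => b hb; apply: NNPP => nb.
  by apply: H; exists b.
have [nx Hnx] : {nx : mon n -> mon n | forall a, ~ Acc (fun a b => ltm a b) a -> ltm (nx a) a /\ ~ Acc (fun a b => ltm a b) (nx a)}.
  apply: constructive_indefinite_description.
  exists (fun a => proj1_sig (constructive_indefinite_description _ (step a))).
  by move=> a; case: constructive_indefinite_description.
pose f k := iter k nx a0.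
have nA : forall k, ~ Acc (fun a b => ltm a b) (f k).
  by elim=> [|k IH] //=; case: (Hnx _ IH).
have dec : forall k, ltm (f k.+1) (f k) by move=> k; case: (Hnx _ (nA k)).
have decl : forall i j, (i < j)%N -> le (f j) (f i) /\ f j != f i.
  move=> i; elim=> // j IH; rewrite ltnS leq_eqVlt => /orP [/eqP ->|].
    by have /andP[] := dec j.
  move=> /IH [h1 h2]; have /andP[d1 d2] := dec j.
  split; first exact: le_trans d1 h1.
  apply/eqP => E; rewrite E in d1; apply/negP: h2; rewrite negbK.
  by apply/eqP; exact: le_anti h1 d1.
have [i [j [ij H]]] := dickson f.
have [h1 h2] := decl _ _ ij; apply/negP: h2; rewrite negbK.
by apply/eqP; apply: le_anti h1 (le_pw H).
Qed.
End Mon.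


Section Omax.
Variables (T : eqType) (r : rel T).
Hypothesis (tot : total r) (tr : transitive r).

Lemma omax_none s : omax r s = None -> s = [::].
Proof. by case: s => //= p s; case: (omax r s) => [q|] //; case: ifP. Qed.

Lemma omax_nil : omax r [::] = None. Proof. by []. Qed.

Lemma omax_some s m : omax r s = Some m -> m \in s /\ forall y, y \in s -> r y m.
Proof.
elim: s m => //= p s IH m.
case E: (omax r s) => [q|].
  have [qs Hq] := IH _ E.
  case: ifP => h [<-].
    split; first by rewrite inE eqxx.
    move=> y; rewrite inE => /orP [/eqP ->|ys]; first by have := tot p p; rewrite orbb.
    exact: tr (Hq _ ys) h.
  split; first by rewrite inE qs orbT.
  move=> y; rewrite inE => /orP [/eqP ->|ys]; last exact: Hq.
  by have := tot q p; rewrite h.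
move=> [<-]; rewrite (omax_none E); split; first by rewrite inE.
by move=> y; rewrite inE => /eqP ->; have := tot p p; rewrite orbb.
Qed.

Hypothesis anti : forall x y, r x y -> r y x -> x = y.
Lemma omax_eq s m : m \in s -> (forall y, y \in s -> r y m) -> omax r s = Some m.
Proof.
move=> ms H; case E: (omax r s) => [q|]; last by rewrite (omax_none E) in ms.
have [qs Hq] := omax_some E; congr Some; apply: anti; [exact: H | exact: Hq].
Qed.
End Omax.

Section Top.
Variables (n m : nat) (le : rel (mon n)).
Hypothesis Hle : admissible le.
Notation top := (topLe (m := m) le).

Definition shift (c : mon n) (p : mon n * 'I_m) := (madd c p.1, p.2).

Lemma top_refl p : top p p.
Proof. by rewrite /topLe eqxx leqnn orbT. Qed.

Lemma top_total : total top.
Proof.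
move=> [a i] [b j]; rewrite /topLe /=; case: (eqVneq a b) => [<-|N] /=.
  by rewrite !andbF /=; exact: leq_total.
rewrite !andbT /= orbF; rewrite orbF; exact: le_total Hle a b.
Qed.

Lemma top_anti p q : top p q -> top q p -> p = q.
Proof.
case: p q => [a i] [b j]; rewrite /topLe /=.
case: (eqVneq a b) => [<-|N] /=; first by rewrite !andbF /= => h1 h2; congr pair; apply: val_inj; apply/eqP; rewrite eqn_leq h1 h2.
rewrite !andbT /= ?orbF => h1 h2; by rewrite (le_anti Hle h1 h2) eqxx in N.
Qed.

Lemma topP (a b : mon n) (i j : 'I_m) :
  reflect ((a <> b /\ le a b) \/ (a = b /\ (i <= j)%N)) (top (a, i) (b, j)).
Proof.
rewrite /topLe /=; case: (eqVneq a b) => [<-|N] /=; rewrite ?andbT ?andbF ?orbF /=.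
  by apply: (iffP idP) => [h|[[]|[]]]; [right|done|done].
apply: (iffP idP) => [h|[[]|[E _]]] //; last by rewrite E eqxx in N.
by left; split=> // E; rewrite E eqxx in N.
Qed.

Lemma top_trans : transitive top.
Proof.
move=> [b j] [a i] [c k] /topP h1 /topP h2; apply/topP.
case: h1 => [[N1 l1]|[E1 l1]]; case: h2 => [[N2 l2]|[E2 l2]]; subst.
- left; split; last exact: (le_trans Hle l1 l2).
  by move=> E; subst; apply: N1; exact: (le_anti Hle l1 l2).
- by left.
- by left.
- by right; split=> //; exact: leq_trans l1 l2.
Qed.

Lemma top_shift c p q : top (shift c p) (shift c q) = top p q.
Proof.
case: p q => [a i] [b j]; rewrite /shift /=.
have E : madd c a = madd c b -> a = b.
  by rewrite ![madd c _]maddC; exact: maddI.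
apply/topP/topP => [[[N l]|[E1 l]]|[[N l]|[E1 l]]].
- left; split; first by move=> E2; apply: N; rewrite E2.
  by move: l; rewrite ![madd c _]maddC; exact: le_addI.
- by right; split => //; exact: E.
- left; split; first by move=> E2; apply: N; exact: E.
  exact: (le_addl Hle).
- by right; rewrite E1.
Qed.

Lemma top_mono a b i : le a b -> top (a, i) (b, i).
Proof.
by move=> h; rewrite /topLe /=; case: (eqVneq a b) => [->|N]; rewrite ?eqxx ?leqnn ?orbT // h.
Qed.

Lemma top_le p q : top p q -> le p.1 q.1.
Proof.
rewrite /topLe => /orP [/andP [] //|/andP [/eqP -> _]]; exact: le_refl.
Qed.

Definition topL p q := top p q && (p != q).
End Top.


Section OrdG.
Variables (n m t : nat) (le : rel (mon n)).
Hypothesis Hle : admissible le.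
Variable ge : 'I_t -> mon n * 'I_m.
Notation top := (topLe (m := m) le).

Definition key (p : mon n * 'I_t) := shift p.1 (ge p.2).
Definition ordGf (p q : mon n * 'I_t) :=
  topLt le (key p) (key q) || ((key p == key q) && (q.2 <= p.2)%N).

Lemma key_inj p q : key p = key q -> p.2 = q.2 -> p = q.
Proof.
case: p q => [a i] [b j] /= E E2; subst; congr pair.
have := congr1 fst E; rewrite /key /shift /=; exact: maddI.
Qed.

Lemma topLt_anti (u v : mon n * 'I_m) : topLt le u v -> topLt le v u -> False.
Proof.
move=> /andP [h1 n1] /andP [h2 _]; by rewrite (top_anti Hle h1 h2) eqxx in n1.
Qed.

Lemma topLt_trans (u v w : mon n * 'I_m) : topLt le u v -> topLt le v w -> topLt le u w.
Proof.
move=> /andP [h1 n1] /andP [h2 n2]; rewrite /topLt (top_trans Hle h1 h2) /=.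
apply/eqP => E; subst; by rewrite (top_anti Hle h1 h2) eqxx in n1.
Qed.

Lemma ordGf_total : total ordGf.
Proof.
move=> p q; rewrite /ordGf /topLt; case: (eqVneq (key p) (key q)) => [E|N].
  by rewrite !andbF /= leq_total.
rewrite /= ?andbT ?andbF /= ?orbF; exact: (top_total Hle).
Qed.

Lemma ordGf_anti p q : ordGf p q -> ordGf q p -> p = q.
Proof.
rewrite /ordGf => /orP [h1|/andP [/eqP E1 l1]] /orP [h2|/andP [/eqP E2 l2]].
- by case: (topLt_anti h1 h2).
- by move: h1; rewrite /topLt E2 eqxx andbF.
- by move: h2; rewrite /topLt E1 eqxx andbF.
- apply: key_inj => //; apply: val_inj; apply/eqP; by rewrite eqn_leq l1 l2.
Qed.

Lemma ordGf_trans : transitive ordGf.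
Proof.
move=> q p r; rewrite /ordGf => /orP [h1|/andP [/eqP E1 l1]] /orP [h2|/andP [/eqP E2 l2]].
- by rewrite (topLt_trans h1 h2).
- by rewrite -E2 h1.
- by rewrite E1 h2.
- by rewrite E1 E2 eqxx (leq_trans l2 l1) orbT.
Qed.

Lemma ordGf_refl p : ordGf p p.
Proof. by rewrite /ordGf eqxx leqnn orbT. Qed.

Lemma key_shift c p : key (madd c p.1, p.2) = shift c (key p).
Proof. by rewrite /key /shift /= maddA. Qed.

Lemma shift_inj c (u v : mon n * 'I_m) : shift c u = shift c v -> u = v.
Proof.
case: u v => [a i] [b j]; rewrite /shift /= => E.
have E1 := congr1 fst E; have E2 := congr1 snd E; simpl in E1, E2; subst; congr pair.
by move: E1; rewrite ![madd c _]maddC; exact: maddI.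
Qed.

Lemma ordGf_shift c p q : ordGf (madd c p.1, p.2) (madd c q.1, q.2) = ordGf p q.
Proof.
rewrite /ordGf !key_shift /topLt (top_shift Hle) /=.
have -> : (shift c (key p) == shift c (key q)) = (key p == key q).
  by apply/eqP/eqP => [/shift_inj|->].
done.
Qed.

Lemma ordGf_mono a b k : le a b -> ordGf (a, k) (b, k).
Proof.
move=> h; rewrite /ordGf /= leqnn andbT.
case: (eqVneq (key (a, k)) (key (b, k))) => [->|N]; rewrite ?orbT //.
rewrite orbF /topLt N andbT /key /shift /=.
apply: top_mono => //; exact: (le_add Hle).
Qed.

Lemma ordGf_le a b k : ordGf (a, k) (b, k) -> le a b.
Proof.
rewrite /ordGf => /orP [/andP [h _]|/andP [/eqP E _]].
  by move: (top_le Hle h); rewrite /key /shift /=; exact: le_addI.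
by have := key_inj E erefl => -[->]; exact: le_refl.
Qed.

Lemma lexwf (A B : Type) (RA : A -> A -> Prop) (RB : B -> B -> Prop) :
  well_founded RA -> well_founded RB ->
  well_founded (fun x y : A * B => RA x.1 y.1 \/ (x.1 = y.1 /\ RB x.2 y.2)).
Proof.
move=> wA wB [a b]; elim: (wA a) b => {}a _ IHa b.
elim: (wB b) => {}b _ IHb; constructor => [[a' b']] /= [H|[E H]].
  exact: IHa.
subst; exact: IHb.
Qed.

Lemma ordGf_wf : well_founded (fun p q => ordGf p q && (p != q)).
Proof.
pose RB := fun x y : nat => (x < y)%N.
have wB : well_founded RB.
  apply: (well_founded_lt_compat _ id) => x y; rewrite /RB => /ltP //.
have wT : well_founded (fun u v : mon n * 'I_m => ltm le u.1 v.1 \/ (u.1 = v.1 /\ RB u.2 v.2)).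
  move=> u; have := lexwf (wf_ltm Hle) wB (u.1, nat_of_ord u.2).
  move: u => [a i] /=; set x := (a, nat_of_ord i) => Ax.
  have : forall v : mon n * 'I_m, (v.1, nat_of_ord v.2) = x -> Acc (fun u v : mon n * 'I_m => ltm le u.1 v.1 \/ u.1 = v.1 /\ RB u.2 v.2) v.
    elim: Ax => y _ IH v Ev; constructor => w hw; apply: (IH (w.1, nat_of_ord w.2)) => //.
    by rewrite -Ev.
  by apply.
have wK := lexwf wT wB.
move=> p; have : Acc (fun x y => (fun u v : mon n * 'I_m => ltm le u.1 v.1 \/ u.1 = v.1 /\ RB u.2 v.2) x.1 y.1 \/ x.1 = y.1 /\ RB x.2 y.2) (key p, t - p.2)%N by apply: wK.
move=> Ay.
suff : forall z, Acc (fun x y => (fun u v : mon n * 'I_m => ltm le u.1 v.1 \/ u.1 = v.1 /\ RB u.2 v.2) x.1 y.1 \/ x.1 = y.1 /\ RB x.2 y.2) z -> forall q, (key q, t - q.2)%N = z -> Acc (fun p q => ordGf p q && (p != q)) q.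
  by move=> H; exact: H Ay p erefl.
move=> z0 Az; elim: Az => z _ IH q Eq; constructor => w /andP [hw nw].
  apply: (IH (key w, t - w.2)%N) => //; rewrite -Eq /=.
  move: hw; rewrite /ordGf => /orP [/andP [h ne]|/andP [/eqP E l]].
    left; move/topP: h => [[N l]|[E l]]; first by left; rewrite /ltm l; apply/eqP.
    right; split => //; move: ne; rewrite /RB.
    rewrite ltn_neqAle l andbT => ne'; apply: contra ne' => E2.
    rewrite /key /shift /= E; apply/eqP; congr pair; apply: val_inj; exact/eqP.
  right; split; first exact: E.
  rewrite /RB; have ne : w.2 != q.2 by apply: contraNneq nw => E2; apply/eqP; exact: key_inj.
  have ql : (q.2 < w.2)%N by rewrite ltn_neqAle l andbT eq_sym.
  by rewrite ltn_sub2l //; exact: leq_trans ql (ltn_ord _).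
Qed.
End OrdG.

Import GRing.Theory.
Local Open Scope ring_scope.


Section Ring.
Variables (R : unitRingType) (n : nat) (D : pred R) (x : 'I_n -> R) (le : rel (mon n))
  (coef : R -> mon n -> R) (supp : R -> seq (mon n)).
Hypothesis HR : leftPBW D x le coef supp.

Lemma HD0 : 0 \in D. Proof. by case: HR => [[]]. Qed.
Lemma HD1 : 1 \in D. Proof. by case: HR => [[]]. Qed.
Lemma HDB a b : a \in D -> b \in D -> a - b \in D. Proof. by case: HR => [[_ _ H _ _]] *; exact: H. Qed.
Lemma HDM a b : a \in D -> b \in D -> a * b \in D. Proof. by case: HR => [[_ _ _ H _]] *; exact: H. Qed.
Lemma HDinv d : d \in D -> d != 0 -> d \is a GRing.unit /\ d^-1 \in D.
Proof. by case: HR => [[_ _ _ _ H]] *; exact: H. Qed.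
Lemma Hadm : admissible le. Proof. by case: HR. Qed.
Lemma Huniq f : uniq (supp f). Proof. by case: HR => _ _ [H _ _ _]. Qed.
Lemma Hsupp f a : (a \in supp f) = (coef f a != 0). Proof. by case: HR => _ _ [_ H _ _]. Qed.
Lemma HcD f a : coef f a \in D. Proof. by case: HR => _ _ [_ _ H _]. Qed.
Lemma Hrep f : f = \sum_(a <- supp f) coef f a * xm x a. Proof. by case: HR => _ _ [_ _ _ H]. Qed.
Lemma Hind (s : seq (mon n)) (c : mon n -> R) : uniq s -> (forall a, c a \in D) ->
  \sum_(a <- s) c a * xm x a = 0 -> forall a, a \in s -> c a = 0.
Proof. by case: HR => _ _ _ H _; exact: H. Qed.
Lemma Hpbw f g a b : sexpr le supp f = Some a -> sexpr le supp g = Some b ->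
  sexpr le supp (f * g) = Some (madd a b).
Proof. by case: HR => _ _ _ _ H; exact: H. Qed.

Lemma HDN a : a \in D -> - a \in D.
Proof. by move=> h; rewrite -sub0r; apply: HDB => //; exact: HD0. Qed.
Lemma HDD a b : a \in D -> b \in D -> a + b \in D.
Proof. by move=> ha hb; rewrite -(opprK b); apply: HDB => //; exact: HDN. Qed.

Lemma sum_sub (u s : seq (mon n)) (F : mon n -> R) : uniq u -> uniq s -> {subset s <= u} ->
  (forall a, a \in u -> a \notin s -> F a = 0) -> \sum_(a <- u) F a = \sum_(a <- s) F a.
Proof.
move=> uu us sub H; rewrite (bigID (fun a => a \in s)) /= [X in _ + X]big1_seq ?addr0; last first.
  by move=> a /andP [h1 h2]; exact: H.
rewrite -big_filter; apply: perm_big; apply: uniq_perm; rewrite ?filter_uniq //.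
by move=> a; rewrite mem_filter; apply/andP/idP => [[]|h] //; split=> //; exact: sub.
Qed.

Lemma coef_unique (s : seq (mon n)) (c : mon n -> R) f : uniq s -> (forall a, c a \in D) ->
  f = \sum_(a <- s) c a * xm x a -> forall b, coef f b = if b \in s then c b else 0.
Proof.
move=> us cD Ef b.
pose u := undup (s ++ supp f).
pose d a := (if a \in s then c a else 0) - coef f a.
have dD : forall a, d a \in D.
  move=> a; apply: HDB; last exact: HcD; by case: ifP => _ //; exact: HD0.
have uu : uniq u by exact: undup_uniq.
have S1 : \sum_(a <- u) (if a \in s then c a else 0) * xm x a = \sum_(a <- s) c a * xm x a.
  rewrite (@sum_sub u s) ?uu //.
    by apply: eq_big_seq => a ->.
  - by move=> a as_; rewrite mem_undup mem_cat as_.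
  - by move=> a _ /negbTE ->; rewrite mul0r.
have S2 : \sum_(a <- u) coef f a * xm x a = \sum_(a <- supp f) coef f a * xm x a.
  rewrite (@sum_sub u (supp f)) ?uu ?Huniq //.
    by move=> a as_; rewrite mem_undup mem_cat as_ orbT.
  by move=> a _; rewrite Hsupp negbK => /eqP ->; rewrite mul0r.
have Z : \sum_(a <- u) d a * xm x a = 0.
  under eq_bigr do rewrite /d mulrBl.
  by rewrite sumrB S1 S2 -Ef -Hrep subrr.
case: (boolP (b \in u)) => bu.
  have := Hind uu dD Z bu; rewrite /d => /eqP; rewrite subr_eq0 => /eqP <-.
  by [].
move: bu; rewrite mem_undup mem_cat negb_or => /andP [/negbTE -> h].
by move: h; rewrite Hsupp negbK => /eqP.
Qed.

Lemma cf0 b : coef 0 b = 0.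
Proof. by rewrite (@coef_unique [::] (fun _ => 0)) ?big_nil //= => _; exact: HD0. Qed.

Lemma supp0 : supp 0 = [::].
Proof.
case E: (supp 0) => [|a s] //; have : a \in supp 0 by rewrite E inE eqxx.
by rewrite Hsupp cf0 eqxx.
Qed.

Lemma cfD f g b : coef (f + g) b = coef f b + coef g b.
Proof.
pose u := undup (supp f ++ supp g).
have uu : uniq u by exact: undup_uniq.
have E : f + g = \sum_(a <- u) (coef f a + coef g a) * xm x a.
  under eq_bigr do rewrite mulrDl.
  rewrite big_split /= (@sum_sub u (supp f)) ?Huniq //; last 2 first.
  - by move=> a as_; rewrite mem_undup mem_cat as_.
  - by move=> a _; rewrite Hsupp negbK => /eqP ->; rewrite mul0r.
  rewrite (@sum_sub u (supp g)) ?Huniq //; last 2 first.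
  - by move=> a as_; rewrite mem_undup mem_cat as_ orbT.
  - by move=> a _; rewrite Hsupp negbK => /eqP ->; rewrite mul0r.
  by rewrite -!Hrep.
rewrite (coef_unique uu _ E); last by move=> a; apply: HDD; exact: HcD.
case: ifP => // bu; move: bu; rewrite mem_undup mem_cat => /negbT; rewrite negb_or => /andP [h1 h2].
by move: h1 h2; rewrite !Hsupp !negbK => /eqP -> /eqP ->; rewrite addr0.
Qed.

Lemma cfZ d f b : d \in D -> coef (d * f) b = d * coef f b.
Proof.
move=> dD.
have E : d * f = \sum_(a <- supp f) (d * coef f a) * xm x a.
  by rewrite {1}(Hrep f) mulr_sumr; apply: eq_bigr => a _; rewrite mulrA.
rewrite (coef_unique (Huniq f) _ E); last by move=> a; apply: HDM => //; exact: HcD.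
by case: ifP => // /negbT; rewrite Hsupp negbK => /eqP ->; rewrite mulr0.
Qed.

Lemma cfN f b : coef (- f) b = - coef f b.
Proof.
have m1 : -1 \in D by apply: HDN; exact: HD1.
by rewrite -mulN1r cfZ // mulN1r.
Qed.

Lemma cfB f g b : coef (f - g) b = coef f b - coef g b.
Proof. by rewrite cfD cfN. Qed.

Lemma cf_sum (I : Type) (r : seq I) (P : pred I) (F : I -> R) b :
  coef (\sum_(i <- r | P i) F i) b = \sum_(i <- r | P i) coef (F i) b.
Proof. exact: (big_morph (fun f => coef f b) (fun f g => cfD f g b) (cf0 b)). Qed.

Lemma coef_xm a b : coef (xm x a) b = (b == a)%:R.
Proof.
have E : xm x a = \sum_(c <- [:: a]) 1 * xm x c by rewrite big_seq1 mul1r.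
rewrite (coef_unique _ _ E) //; last by move=> _; exact: HD1.
by rewrite inE; case: eqP.
Qed.

Lemma le_total' : total le. Proof. exact: (le_total Hadm). Qed.
Lemma le_trans' : transitive le. Proof. move=> b a c; exact: (le_trans Hadm). Qed.

Lemma sexpr_none f : sexpr le supp f = None -> f = 0.
Proof.
move=> E; rewrite (Hrep f) (omax_none E); exact: big_nil.
Qed.

Lemma sexpr0 : sexpr le supp 0 = None.
Proof. by rewrite /sexpr supp0. Qed.

Lemma sexprP f a : sexpr le supp f = Some a ->
  coef f a != 0 /\ forall b, coef f b != 0 -> le b a.
Proof.
move=> /(omax_some le_total' le_trans') [h1 h2]; split; first by rewrite -Hsupp.
by move=> b; rewrite -Hsupp; exact: h2.
Qed.

Lemma sexpr_eq f a : coef f a != 0 -> (forall b, coef f b != 0 -> le b a) -> sexpr le supp f = Some a.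
Proof.
move=> h1 h2; apply: (omax_eq le_total' le_trans' (le_anti Hadm)); first by rewrite Hsupp.
by move=> y; rewrite Hsupp; exact: h2.
Qed.

Lemma coef_gt f a b : sexpr le supp f = Some a -> le a b -> b != a -> coef f b = 0.
Proof.
move=> /sexprP [_ H] ab ba; apply/eqP; apply: contraNT ba => h.
by apply/eqP; apply: (le_anti Hadm) => //; exact: H.
Qed.

Lemma coef_outside f a b : sexpr le supp f = Some a -> ~~ le b a -> coef f b = 0.
Proof. by move=> /sexprP [_ H] nb; apply/eqP; apply: contraNT nb; exact: H. Qed.

Lemma sexpr_some f : f != 0 -> exists a, sexpr le supp f = Some a.
Proof.
move=> nf; case E: (sexpr le supp f) => [a|]; first by exists a.
by rewrite (sexpr_none E) eqxx in nf.
Qed.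

Lemma sexpr_xm a : sexpr le supp (xm x a) = Some a.
Proof.
apply: sexpr_eq; first by rewrite coef_xm eqxx oner_eq0.
move=> b; rewrite coef_xm; case: (eqVneq b a) => [-> _|nb]; first exact: (le_refl Hadm).
by rewrite eqxx.
Qed.

Lemma unit_neq0 (d : R) : d \is a GRing.unit -> d != 0.
Proof. by apply: contraTneq => ->; rewrite unitr0. Qed.



Lemma sexpr_eq2 f g : (forall b, (coef f b != 0) = (coef g b != 0)) -> sexpr le supp f = sexpr le supp g.
Proof.
move=> E; case Eg: (sexpr le supp g) => [a|].
  have [h1 h2] := sexprP Eg; apply: sexpr_eq; first by rewrite E.
  by move=> b; rewrite E; exact: h2.
have g0 := sexpr_none Eg; subst g.
case Ef: (sexpr le supp f) => [a|] //.
by have [h1 _] := sexprP Ef; move: h1; rewrite E cf0 eqxx.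
Qed.

Lemma sexprZ d f : d \in D -> d != 0 -> sexpr le supp (d * f) = sexpr le supp f.
Proof.
move=> dD nd; have [du _] := HDinv dD nd.
apply: sexpr_eq2 => b; rewrite cfZ //; apply/idP/idP; apply: contra => /eqP h.
  by rewrite h mulr0.
by rewrite -(mulKr du (coef f b)) h mulr0.
Qed.

Lemma qc_props a b : qc x coef a b \in D /\ qc x coef a b != 0.
Proof.
split; first exact: HcD.
have := Hpbw (sexpr_xm a) (sexpr_xm b) => /sexprP [h _]; exact: h.
Qed.

Lemma unitD d : d \in D -> d != 0 -> d \is a GRing.unit. Proof. by move=> *; case: (HDinv (d := d)). Qed.

Lemma invD d : d \in D -> d != 0 -> d^-1 \in D /\ d^-1 != 0.
Proof.
move=> dD nd; have [du iD] := HDinv dD nd; split=> //.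
by apply: unit_neq0; rewrite unitrV.
Qed.
End Ring.


Section Vec.
Variables (R : unitRingType) (n : nat) (D : pred R) (x : 'I_n -> R) (le : rel (mon n))
  (coef : R -> mon n -> R) (supp : R -> seq (mon n)).
Hypothesis HR : leftPBW D x le coef supp.
Notation sexp := (sexpr le supp).
Notation Hadm := (Hadm HR).

Lemma vsuppP m (f : 'rV[R]_m) e : (e \in vsupp supp f) = (coef (f 0 e.2) e.1 != 0).
Proof.
rewrite /vsupp -(Hsupp HR); apply/flatten_mapP/idP => [[i _ /mapP [a ha ->]] //|h].
by exists e.2; rewrite ?mem_enum //; apply/mapP; exists e.1 => //; case: e h.
Qed.

Variables (m : nat) (r : rel (mon n * 'I_m)).
Hypotheses (rtot : total r) (rtr : transitive r) (ranti : forall a b, r a b -> r b a -> a = b).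

Lemma entry0 (f : R) : (forall a, coef f a = 0) -> f = 0.
Proof.
move=> H; rewrite (Hrep HR f); case E: (supp f) => [|a s]; first by rewrite big_nil.
have : a \in supp f by rewrite E inE eqxx.
by rewrite (Hsupp HR) H eqxx.
Qed.

Lemma vexp_none (f : 'rV[R]_m) : vexp supp r f = None -> f = 0.
Proof.
move=> /omax_none E; apply/matrixP => i j; rewrite mxE (ord1 i).
apply: entry0 => a; apply/eqP; apply: contraT => h.
have : (a, j) \in vsupp supp f by rewrite vsuppP.
by rewrite E.
Qed.

Lemma vexp0 : vexp supp r (0 : 'rV[R]_m) = None.
Proof.
case E: (vexp supp r 0) => [e|] //; have [h _] := omax_some rtot rtr E.
by move: h; rewrite vsuppP mxE (cf0 HR) eqxx.
Qed.

Lemma vexpP (f : 'rV[R]_m) e : vexp supp r f = Some e ->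
  coef (f 0 e.2) e.1 != 0 /\ forall e', coef (f 0 e'.2) e'.1 != 0 -> r e' e.
Proof.
move=> /(omax_some rtot rtr) [h1 h2]; split; first by rewrite -vsuppP.
by move=> e'; rewrite -vsuppP; exact: h2.
Qed.

Lemma vexp_eq (f : 'rV[R]_m) e : coef (f 0 e.2) e.1 != 0 ->
  (forall e', coef (f 0 e'.2) e'.1 != 0 -> r e' e) -> vexp supp r f = Some e.
Proof.
move=> h1 h2; apply: (omax_eq rtot rtr ranti); first by rewrite vsuppP.
by move=> y; rewrite vsuppP; exact: h2.
Qed.

Lemma vexp_some (f : 'rV[R]_m) : f != 0 -> exists e, vexp supp r f = Some e.
Proof.
move=> nf; case E: (vexp supp r f) => [e|]; first by exists e.
by rewrite (vexp_none E) eqxx in nf.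
Qed.
End Vec.

Section Lead.
Variables (R : unitRingType) (n : nat) (D : pred R) (x : 'I_n -> R) (le : rel (mon n))
  (coef : R -> mon n -> R) (supp : R -> seq (mon n)).
Hypothesis HR : leftPBW D x le coef supp.
Notation sexp := (sexpr le supp).
Notation Hadm := (Hadm HR).
Variable m : nat.
Notation top := (topLe (m := m) le).

Lemma toptot : total top. Proof. exact: top_total Hadm. Qed.
Lemma toptr : transitive top. Proof. exact: top_trans Hadm. Qed.
Lemma topanti : forall a b, top a b -> top b a -> a = b. Proof. exact: top_anti Hadm. Qed.

Lemma gexp_entry (g : 'rV[R]_m) a l : vexp supp top g = Some (a, l) -> sexp (g 0 l) = Some a.
Proof.
move=> /(vexpP HR toptot toptr) [h1 h2]; apply: (sexpr_eq HR) => // b hb.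
by have := h2 (b, l) hb => /(top_le Hadm).
Qed.

Lemma lead_bound (f : R) (g : 'rV[R]_m) b a l : sexp f = Some b ->
  vexp supp top g = Some (a, l) ->
  forall l' c, coef (f * g 0 l') c != 0 -> top (c, l') (madd b a, l).
Proof.
move=> Ef Eg l' c hc.
have [h1 h2] := vexpP HR toptot toptr Eg.
case: (eqVneq (g 0 l') 0) => [E|N]; first by rewrite E mulr0 (cf0 HR) eqxx in hc.
have [d Ed] := sexpr_some HR N.
have [_ H] := sexprP HR (Hpbw HR Ef Ed).
have hd : top (d, l') (a, l).
  by apply: h2 => /=; have [] := sexprP HR Ed.
apply: toptr (top_mono l' (H _ hc)) _.
by have := top_shift Hadm b (d, l') (a, l); rewrite /shift /= => ->.
Qed.

Lemma lead_coef_mul (f : R) (g : 'rV[R]_m) b a l : sexp f = Some b ->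
  vexp supp top g = Some (a, l) -> coef (g 0 l) a = 1 ->
  coef (f * g 0 l) (madd b a) = coef f b * qc x coef b a.
Proof.
move=> Ef Eg g1.
have Ega := gexp_entry Eg.
have [_ Hg] := sexprP HR Ega.
have [hb Hf] := sexprP HR Ef.
rewrite {1}(Hrep HR f) mulr_suml (cf_sum HR).
rewrite (bigD1_seq b) /=; last (by apply: (Huniq HR)); last by rewrite (Hsupp HR).
rewrite big1_seq ?addr0; last first.
  move=> c /andP [nc cin]; rewrite -mulrA (cfZ HR) ?(HcD HR) //.
  have cs : coef f c != 0 by rewrite -(Hsupp HR).
  rewrite (coef_gt HR (f := xm x c * g 0 l) (a := madd c a) (b := madd b a)) ?mulr0 //.
  - exact: (Hpbw HR (sexpr_xm HR c) Ega).
  - by apply: (le_add Hadm); exact: Hf.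
  - by apply: contra nc => /eqP E; rewrite (maddI E).
rewrite -mulrA (cfZ HR) ?(HcD HR) //; congr (_ * _).
rewrite {1}(Hrep HR (g 0 l)) mulr_sumr (cf_sum HR).
have ha : a \in supp (g 0 l) by rewrite (Hsupp HR) g1 oner_eq0.
rewrite (bigD1_seq a) /=; last (by apply: (Huniq HR)); last by [].
rewrite g1 mul1r big1_seq ?addr0 //.
move=> c /andP [cn cin].
have cs : coef (g 0 l) c != 0 by rewrite -(Hsupp HR).
have Ec : sexp (coef (g 0 l) c * xm x c) = Some c.
  by rewrite (sexprZ HR) ?(HcD HR) //; exact: (sexpr_xm HR).
rewrite (coef_gt HR (f := xm x b * (coef (g 0 l) c * xm x c)) (a := madd b c) (b := madd b a)) //.
- exact: (Hpbw HR (sexpr_xm HR b) Ec).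
- by apply: (le_addl Hadm); exact: Hg.
- apply: contra cn => /eqP E; move: E; rewrite ![madd b _]maddC => E; by rewrite (maddI E).
Qed.
End Lead.


Section Main.
Variables (R : unitRingType) (n m t : nat) (D : pred R) (x : 'I_n -> R) (le : rel (mon n))
  (coef : R -> mon n -> R) (supp : R -> seq (mon n)).
Hypothesis HR : leftPBW D x le coef supp.
Variable g : 'I_t -> 'rV[R]_m.
Variable ge : 'I_t -> mon n * 'I_m.
Hypothesis Hge : forall k, gexp le supp g k = Some (ge k).
Hypothesis Hge1 : forall k, coef (g k 0 (ge k).2) (ge k).1 = 1.
Variable h : 'I_t -> 'I_t -> 'I_t -> R.
Hypothesis Hh : forall i j, pairI le supp g i j -> stdrep x le coef supp g i j (h i j).

Notation sexp := (sexpr le supp).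
Notation Hadm := (Hadm HR).
Notation top := (topLe (m := m) le).
Notation ordv := (ordGf le ge).
Notation al k := (ge k).1.
Notation lv k := (ge k).2.

Lemma ordG_eq p q : ordG le supp g p q = ordv p q.
Proof. by rewrite /ordG !Hge /ordGf /key /shift. Qed.

Lemma sexpg_eq k : sexpg le supp g k = al k.
Proof. by rewrite /sexpg Hge. Qed.
Lemma levelg_eq k : levelg le supp g k = Some (lv k).
Proof. by rewrite /levelg Hge. Qed.

Lemma otot : total ordv. Proof. exact: (ordGf_total Hadm). Qed.
Lemma otr : transitive ordv. Proof. exact: (ordGf_trans Hadm). Qed.
Lemma oanti : forall a b, ordv a b -> ordv b a -> a = b. Proof. exact: (ordGf_anti Hadm). Qed.

Definition lin (a : 'rV[R]_t) : 'rV[R]_m := \sum_k a 0 k *: g k.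
Lemma linD a b : lin (a + b) = lin a + lin b.
Proof. by rewrite /lin -big_split; apply: eq_bigr => k _; rewrite mxE scalerDl. Qed.
Lemma lin0 : lin 0 = 0.
Proof. by rewrite /lin big1 // => k _; rewrite mxE scale0r. Qed.
Lemma linZ r a : lin (r *: a) = r *: lin a.
Proof. by rewrite /lin scaler_sumr; apply: eq_bigr => k _; rewrite mxE scalerA. Qed.
Lemma linN a : lin (- a) = - lin a.
Proof. by rewrite -scaleN1r linZ scaleN1r. Qed.
Lemma linB a b : lin (a - b) = lin a - lin b.
Proof. by rewrite linD linN. Qed.
Lemma lin_sum (I : Type) (r : seq I) (P : pred I) (F : I -> 'rV[R]_t) :
  lin (\sum_(i <- r | P i) F i) = \sum_(i <- r | P i) lin (F i).
Proof.
elim: r => [|a r IH]; first by rewrite !big_nil lin0.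
by rewrite !big_cons; case: (P a); rewrite ?linD IH.
Qed.
Lemma ebasE (l k : 'I_t) : ebas R l 0 k = (k == l)%:R.
Proof. by rewrite /ebas mxE eqxx /= eq_sym. Qed.
Lemma lin_ebas (l : 'I_t) : lin (ebas R l) = g l.
Proof.
rewrite /lin (bigD1 l) //= ebasE eqxx scale1r big1 ?addr0 // => k nk.
by rewrite ebasE (negbTE nk) scale0r.
Qed.

Lemma SyzE a : Syz g a <-> lin a = 0. Proof. by []. Qed.

Definition cij (i j : 'I_t) := msub (mjoin (al i) (al j)) (al i).

Lemma rc_eq i j : rc x le coef supp g i j = (qc x coef (cij i j) (al i))^-1 * xm x (cij i j).
Proof. by rewrite /rc !sexpg_eq. Qed.

Lemma syzvecE i j k : syzvec x le coef supp g h i j 0 k =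
  (if k == i then rc x le coef supp g i j else 0) - (if k == j then rc x le coef supp g j i else 0) - h i j k.
Proof.
rewrite /syzvec !mxE summxE (bigD1 k) //= [\sum_(i0 < t | i0 != k) _]big1 => [|l nl]; last first.
  by rewrite !mxE eqxx /= eq_sym (negbTE nl) mulr0.
rewrite addr0 !mxE !eqxx /= mulr1.
by case: (k == i); case: (k == j); rewrite /= ?mulr1 ?mulr0.
Qed.

Lemma syz_s i j : pairI le supp g i j -> Syz g (syzvec x le coef supp g h i j).
Proof.
move=> P; have [E _ _] := Hh P; apply/SyzE.
rewrite /syzvec !linB !linZ !lin_ebas lin_sum.
rewrite -/(SP x le coef supp g i j) E; apply/eqP; rewrite subr_eq0; apply/eqP.
by apply: eq_bigr => k _; rewrite linZ lin_ebas.
Qed.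

Notation rcc := (rc x le coef supp g).
Notation J i j := (mjoin (al i) (al j)).

Lemma mjoinC (a b : mon n) : mjoin a b = mjoin b a.
Proof. by apply: eq_from_tnth => k; rewrite !tnth_mktuple maxnC. Qed.

Lemma cij_add i j : madd (cij i j) (al i) = J i j.
Proof.
rewrite maddC /cij msubK // => k; rewrite tnth_mktuple; exact: leq_maxl.
Qed.
Lemma cji_add i j : madd (cij j i) (al j) = J i j.
Proof. by rewrite cij_add mjoinC. Qed.

Lemma qinv i j : let q := qc x coef (cij i j) (al i) in
  q \is a GRing.unit /\ q^-1 \in D /\ q^-1 != 0.
Proof.
move=> q; have [qD nq] := qc_props HR (cij i j) (al i).
have [iD ni] := invD HR qD nq; split=> //; exact: (unitD HR qD nq).
Qed.

Lemma coef_rc i j c : coef (rcc i j) c = if c == cij i j then (qc x coef (cij i j) (al i))^-1 else 0.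
Proof.
have [_ [iD _]] := qinv i j.
rewrite rc_eq (cfZ HR) // (coef_xm HR); case: eqP => _; by rewrite ?mulr1 ?mulr0.
Qed.

Lemma sexp_rc i j : sexp (rcc i j) = Some (cij i j).
Proof.
have [_ [iD ni]] := qinv i j.
by rewrite rc_eq (sexprZ HR) //; exact: (sexpr_xm HR).
Qed.

Lemma vexp_g k : vexp supp top (g k) = Some (al k, lv k).
Proof. by have := Hge k; rewrite /gexp -surjective_pairing. Qed.

Lemma rcg_bound i j l' c : coef (rcc i j * g i 0 l') c != 0 -> top (c, l') (J i j, lv i).
Proof.
move=> H; rewrite -cij_add; exact: (lead_bound HR (sexp_rc i j) (vexp_g i) H).
Qed.

Lemma rcg_lead i j : coef (rcc i j * g i 0 (lv i)) (J i j) = 1.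
Proof.
rewrite -cij_add (lead_coef_mul HR (sexp_rc i j) (vexp_g i) (Hge1 i)).
rewrite coef_rc eqxx; have [u _] := qinv i j; exact: mulVr.
Qed.

Lemma top_lt_trans (u v w : mon n * 'I_m) : top u v -> topLt le v w -> topLt le u w.
Proof.
move=> h1 /andP [h2 n2]; rewrite /topLt (top_trans Hadm h1 h2) /=.
apply: contra n2 => /eqP E; subst; apply/eqP; exact: (top_anti Hadm h2 h1).
Qed.

Lemma pairI_lv i j : pairI le supp g i j -> (i < j)%N /\ lv i = lv j.
Proof. by rewrite /pairI !levelg_eq => /andP [ij /eqP [E]]. Qed.

Lemma SP_bound i j l' c : pairI le supp g i j ->
  coef (SP x le coef supp g i j 0 l') c != 0 -> topLt le (c, l') (J i j, lv i).
Proof.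
move=> P; have [ij El] := pairI_lv P.
rewrite /SP !mxE (cfB HR) => H.
have B : top (c, l') (J i j, lv i).
  case: (eqVneq (coef (rcc i j * g i 0 l') c) 0) => h1.
    have h2 : coef (rcc j i * g j 0 l') c != 0 by move: H; rewrite h1 sub0r oppr_eq0.
    by have := rcg_bound h2; rewrite mjoinC El.
  exact: rcg_bound h1.
rewrite /topLt B /=; apply: contra H => /eqP [E1 E2]; subst.
have := rcg_lead j i; rewrite mjoinC El => ->; by rewrite -El rcg_lead subrr.
Qed.

Lemma h_bound i j k c : pairI le supp g i j ->
  coef (h i j k) c != 0 -> topLt le (madd c (al k), lv k) (J i j, lv i).
Proof.
move=> P H; have [_ h0 h3] := Hh P.
have hk : h i j k != 0 by apply: contra H => /eqP ->; rewrite (cf0 HR).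
have nSP : SP x le coef supp g i j != 0 by apply: contra hk => /eqP E; rewrite (h0 E).
have [e Ee] := vexp_some HR (topLe le) nSP.
have [b Eb] := sexpr_some HR hk.
have [le1 _] := h3 e Ee.
have t1 := le1 k b (al k, lv k) Eb (vexp_g k).
have [_ Hb] := sexprP HR Eb.
have t0 : top (madd c (al k), lv k) (madd b (al k), lv k) by apply: top_mono; apply: (le_add Hadm); exact: Hb.
apply: top_lt_trans (top_trans Hadm t0 t1) _.
have [ce _] := vexpP HR (@toptot _ _ _ _ _ _ _ HR m) (@toptr _ _ _ _ _ _ _ HR m) Ee.
by case: e Ee ce {le1 t1} => [e1 e2] _ ce; exact: SP_bound P ce.
Qed.

Lemma key_cij i j : key ge (cij i j, i) = (J i j, lv i).
Proof. by rewrite /key /shift /= cij_add. Qed.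

Lemma s_exp i j : pairI le supp g i j ->
  vexp supp ordv (syzvec x le coef supp g h i j) = Some (cij i j, i).
Proof.
move=> P; have [ij El] := pairI_lv P.
have ji : (i == j) = false by apply/negbTE; rewrite neq_ltn ij.
have hi : coef (h i j i) (cij i j) = 0.
  apply/eqP; apply: contraT => H; have := h_bound P H; rewrite cij_add.
  by rewrite /topLt eqxx andbF.
apply: (vexp_eq HR otot otr oanti) => /=.
  rewrite syzvecE eqxx eq_sym ji subr0 (cfB HR) hi subr0 coef_rc eqxx.
  by rewrite eq_sym; have [_ [_ H]] := qinv i j.
move=> [c k] /=; rewrite syzvecE !(cfB HR) => H.
case: (eqVneq (coef (h i j k) c) 0) => Hk; last first.
  by rewrite /ordGf key_cij (h_bound P Hk).
move: H; rewrite Hk subr0.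
case: (eqVneq k i) => [->|ki].
  rewrite ji (cf0 HR) subr0 coef_rc; case: (eqVneq c (cij i j)) => [->|_]; last by rewrite eqxx.
  by move=> _; exact: ordGf_refl.
case: (eqVneq k j) => [->|kj]; last by rewrite !(cf0 HR) subrr eqxx.
rewrite (cf0 HR) sub0r oppr_eq0 coef_rc; case: (eqVneq c (cij j i)) => [->|_]; last by rewrite eqxx.
move=> _; rewrite /ordGf key_cij /key /shift /= cji_add -El eqxx /= ltnW ?orbT //.
Qed.

Lemma exp_entry (a : 'rV[R]_t) b k : vexp supp ordv a = Some (b, k) -> sexp (a 0 k) = Some b.
Proof.
move=> /(vexpP HR otot otr) [h1 h2]; apply: (sexpr_eq HR) => // c hc.
exact: (ordGf_le Hadm (h2 (c, k) hc)).
Qed.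

Lemma exp_other (a : 'rV[R]_t) e k d : vexp supp ordv a = Some e -> sexp (a 0 k) = Some d -> ordv (d, k) e.
Proof.
move=> /(vexpP HR otot otr) [_ h2] Ed; apply: h2 => /=.
by have [] := sexprP HR Ed.
Qed.

Lemma vexpG_shift (a : 'rV[R]_t) b k c : vexp supp ordv a = Some (b, k) ->
  vexp supp ordv (xm x c *: a) = Some (madd c b, k).
Proof.
move=> Ea; have Eb := exp_entry Ea.
apply: (vexp_eq HR otot otr oanti) => /=.
  by rewrite mxE; have [] := sexprP HR (Hpbw HR (sexpr_xm HR c) Eb).
move=> [d k'] /=; rewrite mxE => H.
have nk : a 0 k' != 0 by apply: contra H => /eqP ->; rewrite mulr0 (cf0 HR).
have [d' Ed'] := sexpr_some HR nk.
have o1 := exp_other Ea Ed'.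
have [_ Hd] := sexprP HR (Hpbw HR (sexpr_xm HR c) Ed').
apply: otr (ordGf_mono Hadm ge k' (Hd _ H)) _.
by have := ordGf_shift Hadm ge c (d', k') (b, k); rewrite /= => ->.
Qed.

Lemma syz_lead (a : 'rV[R]_t) b i : Syz g a -> vexp supp ordv a = Some (b, i) ->
  exists j, pairI le supp g i j /\ forall k, (tnth (cij i j) k <= tnth b k)%N.
Proof.
move=> /SyzE Sa Ea; have Ei := exp_entry Ea.
apply: NNPP => Hn.
have Hne : forall k, k != i -> coef (a 0 k * g k 0 (lv i)) (madd b (al i)) = 0.
  move=> k nk; apply/eqP; apply: contraT => H.
  have ak : a 0 k != 0 by apply: contra H => /eqP ->; rewrite mul0r (cf0 HR).
  have [d Ed] := sexpr_some HR ak.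
  have T1 := lead_bound HR Ed (vexp_g k) H.
  have O1 := exp_other Ea Ed.
  move: O1; rewrite /ordGf => /orP [O1|/andP [/eqP E ik]].
    have := top_lt_trans T1 O1; by rewrite /key /shift /= /topLt eqxx andbF.
  exfalso; apply: Hn; exists k; split.
    rewrite /pairI !levelg_eq ltn_neqAle ik andbT eq_sym nk /=.
    by move: E; rewrite /key /shift /= => -[_ ->].
  move=> c; have := congr1 (fun u => tnth u.1 c) E; rewrite /key /shift /= !tnth_mktuple.
  move=> E'; lia.
have := congr1 (fun v : 'rV[R]_m => coef (v 0 (lv i)) (madd b (al i))) Sa.
rewrite /lin summxE mxE (cf0 HR) (cf_sum HR) (bigD1 i) //= big1; last first.
  by move=> k nk; rewrite mxE; exact: Hne.
rewrite addr0 mxE (lead_coef_mul HR Ei (vexp_g i) (Hge1 i)) => /eqP.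
apply/negP; apply: unit_neq0.
have [cD cn] : coef (a 0 i) b \in D /\ coef (a 0 i) b != 0.
  by split; [exact: (HcD HR) | have [] := sexprP HR Ei].
have [qD qn] := qc_props HR b (al i).
by rewrite (unitrMl _ (unitD HR qD qn)); exact: (unitD HR cD cn).
Qed.

Notation S p := (syzvec x le coef supp g h p.1 p.2).
Notation P p := (pairI le supp g p.1 p.2).

Lemma syz_s' i j : pairI le supp g i j -> lin (syzvec x le coef supp g h i j) = 0.
Proof. by move=> H; apply/SyzE; exact: syz_s. Qed.

Lemma pw_add (b c : mon n) : (forall k, tnth c k <= tnth b k)%N -> madd (msub b c) c = b.
Proof. by move=> H; rewrite maddC msubK. Qed.

Lemma GB_ord : isGB supp ordv (Syz g) (fun p => P p) (fun p => S p).
Proof.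
split; first by move=> [i j] /= Pij; exact: syz_s.
move=> [b i]; split.
  move=> [f [Sf nf Ef]]; have [j [Pij pw]] := syz_lead Sf Ef.
  exists (i, j), (msub b (cij i j)), (cij i j, i); split => //=.
    exact: s_exp.
  by rewrite pw_add.
move=> [[i' j] [c [e' [Pij Ee E]]]]; simpl in Pij, Ee.
rewrite (s_exp Pij) in Ee; case: Ee => Ee; subst e'; case: E => -> ->.
exists (xm x c *: S (i', j)); split.
- by apply/SyzE; rewrite linZ (syz_s' Pij) scaler0.
- apply/negP => /eqP E0; have := vexpG_shift c (s_exp Pij).
  by rewrite E0 (vexp0 HR otot otr).
- exact: vexpG_shift (s_exp Pij).
Qed.

Lemma gen0 : (0 : 'rV[R]_t) = \sum_(p | P p) (fun _ => 0 : R) p *: S p.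
Proof. by rewrite big1 // => p _; rewrite scale0r. Qed.

Lemma gen_step (a : 'rV[R]_t) : Syz g a -> exists c : 'I_t * 'I_t -> R,
  a = \sum_(p | P p) c p *: S p.
Proof.
case: (eqVneq a 0) => [->|na]; first by move=> _; exists (fun _ => 0); exact: gen0.
have [e Ee] := vexp_some HR ordv na.
elim/(well_founded_induction (ordGf_wf Hadm ge)): e a Ee {na} => -[b i] IH a Ea Sa.
have [j [Pij pw]] := syz_lead Sa Ea.
set c := msub b (cij i j).
have Eb : madd c (cij i j) = b by rewrite pw_add.
have [F FE] : {F : 'rV[R]_t | F = xm x c *: S (i, j)} by exists (xm x c *: S (i, j)).
have EF : vexp supp ordv F = Some (b, i) by rewrite FE -Eb; exact: vexpG_shift (s_exp Pij).
have [wn HF] := vexpP HR otot otr EF; simpl in wn.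
have [an HA] := vexpP HR otot otr Ea; simpl in an.
set w := coef (F 0 i) b in wn.
have wD : w \in D by exact: (HcD HR).
have [wiD _] := invD HR wD wn.
have wu := unitD HR wD wn.
pose d := coef (a 0 i) b * w^-1.
have dD : d \in D by apply: (HDM HR) => //; exact: (HcD HR).
pose a' := a - d *: F.
have Sa' : Syz g a'.
  apply/SyzE; rewrite /a' FE linB linZ linZ (syz_s' Pij).
  by move/SyzE: Sa => ->; rewrite !scaler0 subr0.
have [c' Ec'] : exists c' : 'I_t * 'I_t -> R, a' = \sum_(p | P p) c' p *: S p.
  case: (eqVneq a' 0) => [->|na']; first by exists (fun _ => 0); exact: gen0.
  have [[g1 k] Ee2] := vexp_some HR ordv na'.
  have [cn _] := vexpP HR otot otr Ee2; simpl in cn.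
  apply: (IH (g1, k)) => //.
  move: cn; rewrite /a' !mxE (cfB HR) (cfZ HR) // => cn.
  have lt : ordv (g1, k) (b, i).
    case: (eqVneq (coef (a 0 k) g1) 0) => [h0|h0]; last exact: HA.
    case: (eqVneq (coef (F 0 k) g1) 0) => [h1|h1]; last exact: HF.
    by move: cn; rewrite h0 h1 mulr0 subr0 eqxx.
  rewrite lt /=; apply: contra cn => /eqP [-> ->].
  by rewrite /d -/w mulrVK // subrr.
exists (fun p => c' p + (if p == (i, j) then d * xm x c else 0)).
under eq_bigr do rewrite scalerDl.
rewrite big_split /= -Ec' (bigD1 (i, j)) //= eqxx big1 ?addr0; last first.
  by move=> p /andP [_ /negbTE ->]; rewrite scale0r.
by rewrite /a' FE -scalerA subrK.
Qed.
End Main.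


Lemma omax_ext (T : Type) (r1 r2 : rel T) s : r1 =2 r2 -> omax r1 s = omax r2 s.
Proof. by move=> E; elim: s => //= p s ->; case: (omax r2 s) => // q; rewrite E. Qed.

Lemma isGB_ext (R : unitRingType) n (supp : R -> seq (mon n)) m (J : finType)
  (r1 r2 : rel (mon n * 'I_m)) L (P : pred J) F :
  r1 =2 r2 -> isGB supp r2 L P F -> isGB supp r1 L P F.
Proof.
move=> E [H1 H2]; split => // e.
have V : forall f, vexp supp r1 f = vexp supp r2 f by move=> f; exact: omax_ext.
split.
  move=> [f [a b c]]; have [j [c' [e' [p q r]]]] := (H2 e).1 (ex_intro _ f (And3 a b (etrans (esym (V f)) c))).
  by exists j, c', e'; split => //; rewrite V.
move=> [j [c' [e' [p q r]]]]; have [f [a b c]] := (H2 e).2 (ex_intro _ j (ex_intro _ c' (ex_intro _ e' (And3 p (etrans (esym (V _)) q) r)))).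
by exists f; split => //; rewrite V.
Qed.

Theorem mainTheorem18 (R : unitRingType) (n m t : nat) (D : pred R) (x : 'I_n -> R)
    (le : rel (mon n)) (coef : R -> mon n -> R) (supp : R -> seq (mon n))
    (HR : leftPBW D x le coef supp)
    (g : 'I_t -> 'rV[R]_m)
    (HG : isGB supp (topLe le) (submod g) predT g)
    (Hlc : forall k, lcoef le coef supp (g k) = Some 1)
    (h : 'I_t -> 'I_t -> 'I_t -> R)
    (Hh : forall i j, pairI le supp g i j -> stdrep x le coef supp g i j (h i j)) :
  isGB supp (ordG le supp g) (Syz g) (fun ij => pairI le supp g ij.1 ij.2)
       (fun ij => syzvec x le coef supp g h ij.1 ij.2) /\
  (forall a : 'rV[R]_t, Syz g a <->
     exists c : 'I_t * 'I_t -> R,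
       a = \sum_(ij | pairI le supp g ij.1 ij.2) c ij *: syzvec x le coef supp g h ij.1 ij.2).
Proof.
have Hex : forall k, exists e, gexp le supp g k = Some e /\ coef (g k 0 e.2) e.1 = 1.
  move=> k; have := Hlc k; rewrite /lcoef /gexp.
  case: (vexp supp (topLe le) (g k)) => [e|] //= [E]; by exists e.
have [ge Hge] : {ge : 'I_t -> mon n * 'I_m | forall k, gexp le supp g k = Some (ge k) /\ coef (g k 0 (ge k).2) (ge k).1 = 1}.
  apply: constructive_indefinite_description.
  exists (fun k => proj1_sig (constructive_indefinite_description _ (Hex k))).
  by move=> k; case: constructive_indefinite_description.
have Hg1 : forall k, gexp le supp g k = Some (ge k) by move=> k; case: (Hge k).
have Hg2 : forall k, coef (g k 0 (ge k).2) (ge k).1 = 1 by move=> k; case: (Hge k).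
split.
  apply: (isGB_ext (r2 := ordGf le ge)); first by move=> p q; exact: (ordG_eq Hg1).
  exact: (GB_ord HR Hg1 Hg2 Hh).
move=> a; split; first exact: (gen_step HR Hg1 Hg2 Hh).
move=> [c ->]; apply/SyzE; rewrite lin_sum big1 // => p Pp.
by rewrite linZ (syz_s' Hh Pp) scaler0.
Qed.
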